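(* Let $\Gamma=\{0=\rho_1<\rho_2<\cdots\}$ be an Arf numerical semigroup and $d_i=\rho_{i+1}-\rho_i$ for $i\ge1$. Let $j\ge2$ and let $x$ be an integer with $d_j\le x<d_{j-1}$. Then $\mathrm{Ap}(\Gamma,-d_j)\subseteq\mathrm{Ap}(\Gamma,-x)$. In particular $|\mathrm{Ap}(\Gamma,x)|\ge|\mathrm{Ap}(\Gamma,d_j)|$.
   Context: A numerical semigroup is a subset of $\mathbb N$ containing $0$, closed under addition, with finite complement; its elements listed increasingly are $\rho_1<\rho_2<\cdots$. $\Gamma$ is Arf if $\rho_i+\rho_j-\rho_k\in\Gamma$ for all $i\ge j\ge k$. For $x\in\mathbb Z$, $\mathrm{Ap}(\Gamma,x)=\{s\in\Gamma: s-x\notin\Gamma\}$. *)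

(* Defs.v *)
From mathcomp Require Import all_boot all_order all_algebra.
Set Implicit Arguments. Unset Strict Implicit. Unset Printing Implicit Defensive.
Import Order.TTheory GRing.Theory Num.Theory.

Definition numerical_semigroup (G : pred nat) : Prop :=
  [/\ G 0,
      (forall a b, G a -> G b -> G (a + b)) &
      exists N, forall n, N <= n -> G n].

(* rho enumerates the elements of G increasingly: rho 1 < rho 2 < ...
   (index 0 is unused; indices start at 1 as in the paper). *)
Definition enumerates (G : pred nat) (rho : nat -> nat) : Prop :=
  [/\ (forall i, 0 < i -> G (rho i)),
      (forall i j, 0 < i -> i < j -> rho i < rho j) &
      (forall s, G s -> exists2 i, 0 < i & rho i = s)].

Definition Arf (G : pred nat) (rho : nat -> nat) : Prop :=
  forall i j k, 0 < k -> k <= j -> j <= i -> G (rho i + rho j - rho k).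

Definition memZ (G : pred nat) (z : int) : bool :=
  match z with Posz n => G n | Negz _ => false end.

Definition Ap (G : pred nat) (x : int) : pred nat :=
  fun s => G s && ~~ memZ G (s%:Z - x)%R.

Definition has_card (A : pred nat) (n : nat) : Prop :=
  exists s : seq nat, [/\ uniq s, (forall k, (k \in s) = A k) & size s = n].

(* Main.v *)
Require Import Defs.
From mathcomp Require Import all_boot all_order all_algebra.
From mathcomp Require Import zify.
Import Order.TTheory GRing.Theory Num.Theory.

Lemma memZ_add (G : pred nat) (a b : nat) :
  memZ G (a%:Z - - b%:Z)%R = G (a + b).
Proof. by rewrite opprK -PoszD. Qed.

Lemma memZ_sub (G : pred nat) (a b : nat) :
  memZ G (a%:Z - b%:Z)%R = (b <= a) && G (a - b).
Proof.
case: (leqP b a) => h.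
  by rewrite subzn.
have : (a%:Z - b%:Z < 0)%R by rewrite subr_lt0 ltz_nat.
by case: (a%:Z - b%:Z)%R.
Qed.

Lemma count_swap (a b : pred nat) (s : seq nat) :
  count a s + count (fun x => b x && ~~ a x) s =
  count b s + count (fun x => a x && ~~ b x) s.
Proof.
elim: s => [|y s IH] //=.
case: (a y); case: (b y) => /=; lia.
Qed.

Lemma count_iota_all (P : pred nat) m k :
  (forall n, m <= n -> P n) -> count P (iota m k) = k.
Proof.
move=> H; rewrite (eq_in_count (a2 := predT)) ?count_predT ?size_iota //.
by move=> n; rewrite mem_iota => /andP [h _]; apply: H.
Qed.

Lemma count_iota_none (P : pred nat) m k :
  (forall n, n < m + k -> P n = false) -> count P (iota m k) = 0.
Proof.
move=> H; rewrite -(count_pred0 (iota m k)); apply: eq_in_count.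
by move=> n; rewrite mem_iota => /andP [_ h]; rewrite H.
Qed.

Lemma count_shift (P : pred nat) k L :
  count P (iota 0 (k + L)) =
  count P (iota 0 k) + count (fun i => P (k + i)) (iota 0 L).
Proof.
by rewrite iotaD add0n (_ : iota k L = [seq k + i | i <- iota 0 L])
  ?count_cat ?count_map // -iotaDl addn0.
Qed.

Lemma count_main (G : pred nat) (k L : nat)
  (hL : forall n, L <= n -> G n) :
  count (fun s => G s && ~~ ((k <= s) && G (s - k))) (iota 0 (k + L)) =
  k + count (fun s => G s && ~~ G (s + k)) (iota 0 (k + L)).
Proof.
have E := count_swap G (fun s => (k <= s) && G (s - k)) (iota 0 (k + L)).
have E1 : count G (iota 0 (k + L)) = count G (iota 0 L) + k.
  by rewrite (addnC k L) iotaD count_cat add0n (@count_iota_all G L k hL).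
have E2 : count (fun s => (k <= s) && G (s - k)) (iota 0 (k + L)) =
          count G (iota 0 L).
  rewrite count_shift count_iota_none; last first.
    by move=> n hn; rewrite leqNgt hn.
  rewrite add0n; apply: eq_count => n /=.
  by rewrite leq_addr addKn.
have E3 : count (fun x => ((k <= x) && G (x - k)) && ~~ G x) (iota 0 (k + L)) =
          count (fun s => G s && ~~ G (s + k)) (iota 0 (k + L)).
  rewrite count_shift count_iota_none; last first.
    by move=> n hn; rewrite leqNgt hn.
  rewrite add0n (addnC k L) count_shift.
  rewrite [X in _ = _ + X](_ : _ = 0); last first.
    apply: count_iota_none => n hn; rewrite (hL (L + n + k)) ?andbF //; lia.
  rewrite addn0; apply: eq_count => n /=.
  by rewrite leq_addr addKn addnC.
lia.
Qed.

Lemma has_card_count (A : pred nat) n X :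
  has_card A n -> (forall s, A s -> s < X) -> n = count A (iota 0 X).
Proof.
move=> [s [us ms <-]] hb.
rewrite -size_filter; apply: perm_size; apply: uniq_perm => //.
  by rewrite filter_uniq // iota_uniq.
move=> y; rewrite mem_filter mem_iota ms add0n /=.
by case h: (A y) => //=; rewrite hb.
Qed.

Lemma Ap_pos (G : pred nat) k :
  Ap G k%:Z =1 (fun s => G s && ~~ ((k <= s) && G (s - k))).
Proof. by move=> s; rewrite /Ap memZ_sub. Qed.

Lemma Ap_neg (G : pred nat) k :
  Ap G (- k%:Z)%R =1 (fun s => G s && ~~ G (s + k)).
Proof. by move=> s; rewrite /Ap memZ_add. Qed.

Lemma Ap_bound (G : pred nat) k N (hN : forall n, N <= n -> G n) s :
  Ap G k%:Z s -> s < k + N.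
Proof.
rewrite Ap_pos => /andP [_]; rewrite ltnNge; apply: contra => h.
by rewrite hN ?andbT; lia.
Qed.

Theorem lemma3p5 (G : pred nat) (rho : nat -> nat)
  (hG : numerical_semigroup G) (hrho : enumerates G rho) (hArf : Arf G rho)
  (j : nat) (x : int) (hj : 2 <= j)
  (hx1 : ((rho j.+1 - rho j)%:Z <= x)%R)
  (hx2 : (x < (rho j - rho j.-1)%:Z)%R) :
  (forall s, Ap G (- (rho j.+1 - rho j)%:Z)%R s -> Ap G (- x)%R s) /\
  (forall m n, has_card (Ap G x) m -> has_card (Ap G (rho j.+1 - rho j)%:Z) n ->
     n <= m).
Proof.
case: hG => G0 Gadd [N hN].
case: hrho => rhoG rhoinc rhosurj.
have rhole : forall a b, 0 < a -> a <= b -> rho a <= rho b.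
  move=> a b ha; rewrite leq_eqVlt => /orP [/eqP -> //|hab].
  exact: ltnW (rhoinc _ _ ha hab).
have rholt : forall a b, 0 < a -> 0 < b -> rho a < rho b -> a < b.
  move=> a b ha hb h; rewrite ltnNge; apply/negP => hba.
  by have := rhole _ _ hb hba; rewrite leqNgt h.
have dmono : forall a, 0 < a -> rho a.+2 - rho a.+1 <= rho a.+1 - rho a.
  move=> a ha.
  have hA := hArf a.+1 a.+1 a ha (leqnSn a) (leqnn _).
  have [m hm hrm] := rhosurj _ hA.
  have h1 := rhoinc a a.+1 ha (ltnSn a).
  have h2 : rho a.+1 < rho m by rewrite hrm; lia.
  have h3 := rholt _ _ (ltn0Sn a) hm h2.
  have := rhole _ _ (ltn0Sn a.+1) h3; lia.
have dmono2 : forall a t, 0 < a -> rho (a + t).+1 - rho (a + t) <= rho a.+1 - rho a.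
  move=> a t ha; elim: t => [|t IH]; first by rewrite addn0.
  apply: leq_trans IH; rewrite addnS; apply: dmono; lia.
have j0 : 0 < j by lia.
have hd := rhoinc j j.+1 j0 (ltnSn j).
set d := rho j.+1 - rho j in hx1 hx2 *.
case: x hx1 hx2 => [x'|x'] hx1 hx2; last by [].
rewrite lez_nat in hx1; rewrite ltz_nat in hx2.
have part1 : forall s, Ap G (- d%:Z)%R s -> Ap G (- x'%:Z)%R s.
  move=> s; rewrite !Ap_neg => /andP [Gs nGs]; rewrite Gs /=.
  have [i hi hri] := rhosurj _ Gs.
  case: (ltnP i j) => hij.
    apply/negP => hG'.
    have [m hm hrm] := rhosurj _ hG'.
    have hdi := dmono2 i (j.-1 - i) hi.
    have e : i + (j.-1 - i) = j.-1 by lia.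
    rewrite e (_ : j.-1.+1 = j) in hdi; last by lia.
    have hi1 := rhoinc i i.+1 hi (ltnSn i).
    have a1 : rho i < rho m by rewrite hrm -hri; lia.
    have a2 : rho m < rho i.+1 by rewrite hrm -hri; lia.
    have := rholt _ _ hi hm a1; have := rholt _ _ hm (ltn0Sn i) a2; lia.
  exfalso; move/negP: nGs; apply.
  rewrite leq_eqVlt in hij; case/orP: hij => [/eqP eij|hij].
    rewrite -hri -eij /d; rewrite subnKC; [exact: rhoG | lia].
  have := hArf i j.+1 j j0 (leqnSn j) hij.
  rewrite hri -addnBA //; lia.
split; first exact: part1.
move=> m n hm hn.
have hN' : forall n0, N + (x' - d) <= n0 -> G n0.
  by move=> n0 h; apply: hN; lia.
have ex : d + (N + (x' - d)) = x' + N by lia.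
have e1 := @has_card_count _ _ (x' + N) hm (fun s h => @Ap_bound G x' N hN s h).
have b2 : forall s, Ap G d s -> s < x' + N.
  move=> s h; have := @Ap_bound G d N hN s h; lia.
have e2 := @has_card_count _ _ (x' + N) hn b2.
rewrite e1 e2 (eq_count (Ap_pos G x')) (eq_count (Ap_pos G d)).
rewrite -{1}ex count_main // ex count_main //.
apply: leq_add hx1 _; apply: sub_count => s.
by have := part1 s; rewrite !Ap_neg.
Qed.
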